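(* Let $p$ be a prime and let $A$, $B$ be nontrivial finite $p$-groups. Let $p^d$ be the maximum order of an element of $A$. Then $$a(B)\le a(A\wr B)\le p^d a(B).$$
   Context: For a finite group $G$, the average order is $a(G)=\frac{1}{|G|}\sum_{g\in G}\mathrm{order}(g)$. For groups $A,B$, let $K=\prod_{b\in B}A$, on which $B$ acts by $x\cdot(\alpha_b)_b=(\alpha_{x^{-1}b})_b$ for $x\in B$; the wreath product $A\wr B$ is the semidirect product $K\rtimes B$ for this action. *)

(* Defs.v *)
From HB Require Import structures.
From mathcomp Require Import all_boot all_order all_algebra all_fingroup.
Set Implicit Arguments. Unset Strict Implicit. Unset Printing Implicit Defensive.
Import GRing.Theory.
Local Open Scope group_scope.

Definition avg_order (gT : finGroupType) (G : {set gT}) : rat :=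
  ((\sum_(g in G) #[g])%:R / (#|G|)%:R)%R.

(* The (regular, unrestricted) wreath product A wr B = K ⋊ B with
   K = prod_{b in B} A = {ffun B -> A}, B acting by
   (x . alpha)_b = alpha_(x^-1 b). *)
Section Wreath.
Variables aT bT : finGroupType.

Definition wreath : Type := ({ffun bT -> aT} * bT)%type.
HB.instance Definition _ := Finite.on wreath.

Definition wr_act (x : bT) (f : {ffun bT -> aT}) : {ffun bT -> aT} :=
  [ffun b => f (x^-1 * b)].

Definition wr_mul (u v : wreath) : wreath :=
  ([ffun b => u.1 b * wr_act u.2 v.1 b], u.2 * v.2).
Definition wr_one : wreath := ([ffun => 1], 1).
Definition wr_inv (u : wreath) : wreath :=
  (wr_act u.2^-1 [ffun b => (u.1 b)^-1], u.2^-1).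

Lemma wr_mulA : associative wr_mul.
Proof.
move=> [a x] [b y] [c z]; rewrite /wr_mul /wr_act /=; congr (_, _).
  by apply/ffunP=> d; rewrite !ffunE /= ?ffunE invMg !mulgA.
by rewrite mulgA.
Qed.

Lemma wr_mul1 : left_id wr_one wr_mul.
Proof.
move=> [a x]; rewrite /wr_mul /wr_act /=; congr (_, _).
  by apply/ffunP=> d; rewrite !ffunE invg1 !mul1g.
by rewrite mul1g.
Qed.

Lemma wr_mulV : left_inverse wr_one wr_inv wr_mul.
Proof.
move=> [a x]; rewrite /wr_mul /wr_act /wr_one /=; congr (_, _).
  by apply/ffunP=> d; rewrite !ffunE /= ?ffunE invgK mulVg.
by rewrite mulVg.
Qed.

HB.instance Definition _ := Finite_isGroup.Build wreath wr_mulA wr_mul1 wr_mulV.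
End Wreath.

(* Main.v *)
Require Import Defs.
From mathcomp Require Import all_boot all_order all_algebra all_fingroup all_solvable.
Set Implicit Arguments. Unset Strict Implicit. Unset Printing Implicit Defensive.
Import GRing.Theory Num.Theory.

Section Aux.
Variables aT bT : finGroupType.
Local Open Scope group_scope.

Lemma wr_mulE (u v : wreath aT bT) :
  u * v = ([ffun b => u.1 b * v.1 (u.2^-1 * b)], u.2 * v.2).
Proof. by rewrite /= /mulg /= /wr_mul /wr_act; congr (_, _); apply/ffunP=> b; rewrite !ffunE. Qed.

Lemma wr_exp2 (u : wreath aT bT) n : (u ^+ n).2 = u.2 ^+ n.
Proof.
elim: n => [|n IH]; first by rewrite !expg0.
by rewrite !expgS wr_mulE /= IH.
Qed.

Lemma wr_exp1 (u : wreath aT bT) n b : u.2 = 1 -> (u ^+ n).1 b = (u.1 b) ^+ n.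
Proof.
move=> u21; elim: n => [|n IH]; first by rewrite !expg0 /= /oneg /= ffunE.
by rewrite !expgS wr_mulE /= ffunE u21 invg1 mul1g IH.
Qed.

Lemma wr_order_ge (u : wreath aT bT) : #[u.2] %| #[u].
Proof.
by rewrite order_dvdn -wr_exp2 expg_order.
Qed.

Lemma wr_order_le (u : wreath aT bT) e :
  (forall a : aT, #[a] %| e) -> #[u] %| #[u.2] * e.
Proof.
move=> He; rewrite order_dvdn expgM; apply/eqP.
set v := u ^+ #[u.2].
have v2 : v.2 = 1 by rewrite /v wr_exp2 expg_order.
case: v v2 => [f x] /= ->.
change (((f, 1) : wreath aT bT) ^+ e = ([ffun => 1], 1)).
apply: injective_projections => /=; last by rewrite wr_exp2 /= expg1n.
apply/ffunP=> b; rewrite (@wr_exp1 (f, 1)) //= ffunE.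
by apply/eqP; rewrite -order_dvdn.
Qed.
End Aux.

Theorem theorem3 (p : nat) (aT bT : finGroupType) (d : nat) :
  prime p ->
  (p.-group [set: aT])%g -> (p.-group [set: bT])%g ->
  [set: aT] != 1%g -> [set: bT] != 1%g ->
  \max_(x : aT) #[x]%g = p ^ d ->
  (avg_order [set: bT] <= avg_order [set: wreath aT bT])%R /\
  (avg_order [set: wreath aT bT] <= (p ^ d)%:R * avg_order [set: bT])%R.
Proof.
move=> pp pA _ _ _ hmax.
have He : forall a : aT, (#[a]%g %| p ^ d)%N.
  move=> a; have := mem_p_elt pA (in_setT a).
  move=> /p_natP [k hk]; rewrite hk; apply: dvdn_exp2l.
  rewrite -(leq_exp2l _ _ (prime_gt1 pp)) -hk -hmax.
  exact: leq_bigmax.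
pose K := #|{ffun bT -> aT}|.
pose SB := (\sum_(x in [set: bT]) #[x]%g)%N.
pose SW := (\sum_(u in [set: wreath aT bT]) #[u]%g)%N.
have cardW : #|[set: wreath aT bT]| = (K * #|[set: bT]|)%N.
  by rewrite !cardsT card_prod.
have SWE : SW = (\sum_(f : {ffun bT -> aT}) \sum_(x : bT) #[(f, x) : wreath aT bT]%g)%N.
  rewrite /SW (eq_bigl (fun _ => true)); last by move=> u; rewrite in_setT.
  by rewrite pair_big /=; apply: eq_bigr => -[].
have SBE : SB = (\sum_(x : bT) #[x]%g)%N.
  by rewrite /SB; apply: eq_bigl => x; rewrite in_setT.
have lo : (K * SB <= SW)%N.
  rewrite SWE SBE -sum_nat_const /K; apply: leq_sum => f _.
  apply: leq_sum => x _; apply: dvdn_leq; first exact: order_gt0.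
  exact: (wr_order_ge (f, x)).
have hi : (SW <= p ^ d * (K * SB))%N.
  rewrite SWE SBE -sum_nat_const /K big_distrr /=; apply: leq_sum => f _.
  rewrite big_distrr /=; apply: leq_sum => x _.
  apply: dvdn_leq; first by rewrite muln_gt0 order_gt0 expn_gt0 prime_gt0.
  by rewrite mulnC; exact: (wr_order_le (f, x) He).
have Kp : (0 < K)%N by rewrite /K card_ffun expn_gt0; apply/orP; left; apply/card_gt0P; exists 1%g.
have Bp : (0 < #|[set: bT]|)%N by apply/card_gt0P; exists 1%g.
rewrite /avg_order -/SB -/SW cardW.
have Bp' : (0 < (#|[set: bT]|)%:R :> rat)%R by rewrite ltr0n.
have Wp' : (0 < (K * #|[set: bT]|)%:R :> rat)%R by rewrite ltr0n muln_gt0 Kp.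
split.
  rewrite ler_pdivrMr // mulrAC ler_pdivlMr // -!natrM ler_nat.
  by rewrite mulnA leq_mul2r [(SB * K)%N]mulnC lo orbT.
rewrite ler_pdivrMr // mulrA mulrAC ler_pdivlMr // -!natrM ler_nat.
apply: leq_trans (leq_mul hi (leqnn #|[set: bT]|)) _.
by rewrite !mulnA leq_mul2r mulnAC leqnn orbT.
Qed.
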